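(* Let $R$ be a ring and let $A$ be a left localization of $R$, i.e. $A=S'^{-1}R$ for some $S'\in\mathrm{Den}_l(R,\mathfrak a)$, $\mathfrak a\in\mathrm{Ass}_l(R)$. Then $A$ is a maximal left quotient ring of $R$ if and only if $Q_l(A)=A$ and $\mathrm{Ass}_l(A)=\{0\}$, i.e. $A$ is a left localization maximal ring.
   Context: Rings are associative with $1$. A multiplicatively closed subset $S$ ($1\in S$, $0\notin S$) is a left Ore set if $Sr\cap Rs\ne\emptyset$ for all $r\in R,s\in S$; $\mathrm{ass}(S):=\{r\mid sr=0\text{ for some }s\in S\}$; it is a left denominator set if moreover $rs=0$ ($s\in S$) implies $tr=0$ for some $t\in S$. $\mathrm{Den}_l(R)$ is the set of left denominator sets, $\mathrm{Ass}_l(R)=\{\mathrm{ass}(S)\mid S\in\mathrm{Den}_l(R)\}$, $\mathrm{Den}_l(R,\mathfrak a)=\{S\mid\mathrm{ass}(S)=\mathfrak a\}$. The left localizations $S^{-1}R$, $S\in\mathrm{Den}_l(R)$, form a poset in which $S_1^{-1}R\to S_2^{-1}R$ whenever $S_1\subseteq S_2$ (via the natural map $s^{-1}r\mapsto s^{-1}r$); its maximal elements, the maximal left quotient rings of $R$, are exactly the rings $S^{-1}R$ with $S$ a maximal element of $(\mathrm{Den}_l(R),\subseteq)$. For a ring $B$, $Q_l(B):=S_0(B)^{-1}B$ where $S_0(B)$ is the largest element of $\mathrm{Den}_l(B,0)$. A ring $B$ is a left localization maximal ring if $Q_l(B)=B$ and $\mathrm{Ass}_l(B)=\{0\}$. 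*)

(* Defs.v *)
From HB Require Import structures.
From mathcomp Require Import all_boot all_algebra.
Set Implicit Arguments. Unset Strict Implicit. Unset Printing Implicit Defensive.
Import GRing.Theory.
Local Open Scope ring_scope.

Definition mult_closed (R : nzRingType) (S : R -> Prop) : Prop :=
  [/\ S 1, ~ S 0 & forall a b, S a -> S b -> S (a * b)].

Definition left_Ore (R : nzRingType) (S : R -> Prop) : Prop :=
  forall r s, S s -> exists s' r', S s' /\ s' * r = r' * s.

Definition ass (R : nzRingType) (S : R -> Prop) (r : R) : Prop :=
  exists s, S s /\ s * r = 0.

Definition Den_l (R : nzRingType) (S : R -> Prop) : Prop :=
  [/\ mult_closed S, left_Ore S &
      forall r s, S s -> r * s = 0 -> exists t, S t /\ t * r = 0].

Definition Den_l_at (R : nzRingType) (a : R -> Prop) (S : R -> Prop) : Prop :=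
  Den_l S /\ forall r, ass S r <-> a r.

Definition Ass_l (R : nzRingType) (a : R -> Prop) : Prop :=
  exists S, Den_l_at a S.

Definition inverse_of (A : nzRingType) (x u : A) : Prop := u * x = 1 /\ x * u = 1.

(* f : R -> A (a ring homomorphism) presents A as the left localization
   S^{-1}R (left ring of fractions in the sense of Stenstrom):
   (i) f(s) is a unit for all s in S,
   (ii) every a in A has the form f(s)^{-1} f(r) with s in S,
   (iii) ker f = ass(S). *)
Definition is_left_localization (R A : nzRingType) (f : R -> A) (S : R -> Prop) : Prop :=
  [/\ forall s, S s -> exists u, inverse_of (f s) u,
      forall a : A, exists s r u, [/\ S s, inverse_of (f s) u & a = u * f r]
    & forall r, f r = 0 <-> ass S r].

Definition max_Den_l (R : nzRingType) (S : R -> Prop) : Prop :=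
  Den_l S /\ forall T, Den_l T -> (forall x, S x -> T x) -> forall x, T x -> S x.

Definition is_S0 (R : nzRingType) (S : R -> Prop) : Prop :=
  Den_l_at (fun r => r = 0) S /\
  forall T, Den_l_at (fun r => r = 0) T -> forall x, T x -> S x.

(* Q_l(B) = B : B is (via the identity map) its own localization at S_0(B) *)
Definition Ql_eq_self (B : nzRingType) : Prop :=
  exists S0, is_S0 S0 /\ is_left_localization (@id B) S0.

Definition Ass_l_trivial (B : nzRingType) : Prop :=
  forall a : B -> Prop, Ass_l a <-> (forall r, a r <-> r = 0).

Definition left_localization_maximal (B : nzRingType) : Prop :=
  Ql_eq_self B /\ Ass_l_trivial B.

Definition max_left_quotient_ring (R A : nzRingType) (f : R -> A) : Prop :=
  exists S, max_Den_l S /\ is_left_localization f S.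

(* Main.v *)
Require Import Defs.
From HB Require Import structures.
From mathcomp Require Import all_boot all_algebra.
Set Implicit Arguments. Unset Strict Implicit. Unset Printing Implicit Defensive.
Import GRing.Theory.
Local Open Scope ring_scope.

Section Gen.
Variable A : nzRingType.
Definition unitA (x : A) := exists u, inverse_of x u.

Lemma unitA_mul x y : unitA x -> unitA y -> unitA (x * y).
Proof.
move=> [u [ux xu]] [v [vy yv]]; exists (v * u); split.
  by rewrite mulrA -(mulrA v) ux mulr1 vy.
by rewrite mulrA -(mulrA x) yv mulr1 xu.
Qed.

Lemma unitA1 : unitA 1. Proof. by exists 1; split; rewrite mulr1. Qed.

Lemma unitA0 : ~ unitA 0.
Proof. by move=> [u [h _]]; move: h; rewrite mulr0 => /eqP; rewrite eq_sym oner_eq0. Qed.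

Lemma units_Den : Den_l unitA.
Proof.
split.
- split; [exact: unitA1 | exact: unitA0 | exact: unitA_mul].
- move=> r s [v [vs sv]]; exists 1, (r * v); split; first exact: unitA1.
  by rewrite mul1r -mulrA vs mulr1.
- move=> r s [v [vs sv]] rs0; exists 1; split; first exact: unitA1.
  by rewrite mul1r -(mulr1 r) -sv mulrA rs0 mul0r.
Qed.

Lemma ass_units r : ass unitA r <-> r = 0.
Proof.
split.
- by move=> [s [[v [vs sv]] sr]]; rewrite -(mul1r r) -vs -mulrA sr mulr0.
- by move=> ->; exists 1; split; [exact: unitA1 | rewrite mulr0].
Qed.

Lemma llm_all_units : left_localization_maximal A ->
  forall T, Den_l T -> forall x, T x -> unitA x.
Proof.
move=> [[S0 [[HS0 Hmax] [Hu _ _]]] AssT] T DT x Tx.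
have H : forall r, ass T r <-> r = 0.
  by apply: (AssT (ass T)).1; exists T; split.
exact: (Hu x (Hmax T (conj DT H) x Tx)).
Qed.

Lemma all_units_llm : (forall T, Den_l T -> forall x, T x -> unitA x) ->
  left_localization_maximal A.
Proof.
move=> H; split.
- exists unitA; split; first split.
  + by split; [exact: units_Den | exact: ass_units].
  + by move=> T [DT _]; exact: H.
  + split.
    * by [].
    * move=> a; exists 1, a, 1; split; [exact: unitA1 | by split; rewrite /= mulr1 | by rewrite mul1r].
    * by move=> r; exact: (iff_sym (ass_units r)).
- move=> a; split.
  + move=> [S [DS Hass]] r; split.
    * by move=> /Hass [s [Ss sr]]; apply/ass_units; exists s; split => //; exact: H Ss.
    * move=> ->; apply/Hass; exists 1; split; last by rewrite mulr0.
      by case: DS => [[]].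
  + move=> Ha; exists (fun x => x = 1); split.
    * split.
      -- split => //; last by move=> a' b -> ->; rewrite mulr1.
         by move=> /eqP; rewrite eq_sym oner_eq0.
      -- by move=> r s ->; exists 1, r; rewrite mul1r mulr1.
      -- by move=> r s -> ; rewrite mulr1 => ->; exists 1; rewrite mulr0.
    * move=> r; split.
      -- by move=> [s [-> h]]; apply/Ha; rewrite -(mul1r r).
      -- by move=> /Ha ->; exists 1; rewrite mulr0.
Qed.
End Gen.

Section Loc.
Variables (R A : nzRingType) (f : {rmorphism R -> A}) (S : R -> Prop).
Hypothesis DS : Den_l S.
Hypothesis LS : is_left_localization f S.

Lemma loc_mul a : exists s y, S s /\ f s * a = f y.
Proof.
case: LS => _ Ha _; have [s [r [u [Ss [us su] ->]]]] := Ha a.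
by exists s, r; split => //; rewrite mulrA su mul1r.
Qed.

Lemma loc_unit s : S s -> unitA (f s).
Proof. by case: LS => H _ _; exact: H. Qed.

Lemma loc_ker r : f r = 0 -> exists s, S s /\ s * r = 0.
Proof. by case: LS => _ _ H; move/H. Qed.

Lemma SmulS a b : S a -> S b -> S (a * b).
Proof. by case: DS => [[_ _ H] _ _]; exact: H. Qed.

Lemma loc_mul2 a b : exists s y z, [/\ S s, f s * a = f y & f s * b = f z].
Proof.
have [s1 [y1 [S1 h1]]] := loc_mul b.
have [s2 [y2 [S2 h2]]] := loc_mul a.
case: DS => _ Ore _; have [s3 [w [S3 e]]] := Ore s1 s2 S2.
exists (s3 * s1), (w * y2), (s3 * y1); split.
- exact: SmulS.
- by rewrite e rmorphM -mulrA h2 rmorphM.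
- by rewrite rmorphM -mulrA h1 rmorphM.
Qed.
End Loc.

Section Dir2.
Variables (R A : nzRingType) (f : {rmorphism R -> A}) (S : R -> Prop).
Hypothesis MS : max_Den_l S.
Hypothesis LS : is_left_localization f S.
Variable T : A -> Prop.
Hypothesis DT : Den_l T.

Let DS : Den_l S := MS.1.

Definition P (a : A) := (exists c, T (c * a)) /\ (forall y, ass T (y * a) -> ass T y).

Lemma T1 : T 1. Proof. by case: DT => [[]]. Qed.
Lemma TM a b : T a -> T b -> T (a * b). Proof. by case: DT => [[_ _ H] _ _]; exact: H. Qed.

Lemma P_mul a1 a2 : P a1 -> P a2 -> P (a1 * a2).
Proof.
move=> [[c1 T1'] R1] [[c2 T2'] R2]; split.
- case: DT => _ Ore _; have [s' [r' [Ts e]]] := Ore c2 (c1 * a1) T1'.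
  exists (r' * c1); rewrite mulrA -(mulrA r') -e -mulrA.
  exact: TM.
- by move=> y h; apply: R1; apply: R2; rewrite -mulrA.
Qed.

Lemma P_T t : T t -> P t.
Proof.
move=> Tt; split; first by exists 1; rewrite mul1r.
move=> y [t' [Tt' h]]; case: DT => _ _ Dn.
have [t'' [Tt'' h']] : exists t'', T t'' /\ t'' * (t' * y) = 0 by apply: (Dn _ t Tt); rewrite -mulrA.
by exists (t'' * t'); split; [exact: TM | rewrite -mulrA].
Qed.

Lemma P_unit a : unitA a -> P a.
Proof.
move=> [u [ua au]]; split; first by exists u; rewrite ua; exact: T1.
move=> y [t' [Tt' h]]; exists t'; split => //.
by rewrite -(mulr1 y) -au !mulrA -(mulrA t') h mul0r.
Qed.

Lemma P_0 : ~ P 0.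
Proof. move=> [[c Tc] _]; case: DT => [[_ H _] _ _]; apply: H; by rewrite mulr0 in Tc. Qed.

Definition S1 x := P (f x).

Lemma S1_st s t : S s -> T t -> P (f s * t).
Proof. by move=> Ss Tt; apply: P_mul; [apply: P_unit; exact: (loc_unit LS) | exact: P_T]. Qed.

Lemma S1_Den : Den_l S1.
Proof.
split.
- split.
  + by rewrite /S1 rmorph1; apply: P_unit; exact: unitA1.
  + by rewrite /S1 rmorph0; exact: P_0.
  + by move=> a b Pa Pb; rewrite /S1 rmorphM; exact: P_mul.
- move=> r x [[c Tc] _].
  case: DT => _ Ore _; have [t' [b [Tt' e]]] := Ore (f r) (c * f x) Tc.
  have [s [z [y [Ss hz hy]]]] := loc_mul2 DS LS t' (b * c).
  have : f (z * r - y * x) = 0.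
    rewrite rmorphB !rmorphM -hz -hy -!mulrA e mulrA.
    by rewrite subrr.
  move/(loc_ker LS) => [s4 [S4 h4]].
  exists (s4 * z), (s4 * y); split.
  + rewrite /S1 rmorphM -hz mulrA -rmorphM; apply: S1_st => //; exact: (SmulS DS).
  + by move/eqP: h4; rewrite mulrBr subr_eq0 !mulrA => /eqP.
- move=> r x [_ Rx] rx0.
  have : ass T (f r * f x) by rewrite -rmorphM rx0 rmorph0; exists 1; rewrite mulr0; split => //; exact: T1.
  move/Rx => [t [Tt h]].
  have [s [z [Ss hz]]] := loc_mul LS t.
  have : f (z * r) = 0 by rewrite rmorphM -hz -mulrA h mulr0.
  move/(loc_ker LS) => [s4 [S4 h4]].
  exists (s4 * z); split; last by rewrite -mulrA.
  rewrite /S1 rmorphM -hz mulrA -rmorphM; apply: S1_st => //; exact: (SmulS DS).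
Qed.

Lemma dir2_units x : T x -> unitA x.
Proof.
move=> Tx; case: LS => _ Ha _; have [s [r [u [Ss [us su] ex]]]] := Ha x.
have Pr : S1 r.
  rewrite /S1 (_ : f r = f s * x); last by rewrite ex mulrA su mul1r.
  exact: S1_st.
have Sr : S r.
  case: MS => _ Hm; apply: (Hm S1 S1_Den) => // y Sy; apply: P_unit; exact: (loc_unit LS).
rewrite ex; apply: unitA_mul; last exact: (loc_unit LS).
by exists (f s).
Qed.
End Dir2.

Section Dir1.
Variables (R A : nzRingType) (f : {rmorphism R -> A}) (S' : R -> Prop).
Hypothesis DS' : Den_l S'.
Hypothesis LS' : is_left_localization f S'.
Hypothesis H : forall T : A -> Prop, Den_l T -> forall x, T x -> unitA x.

Definition SU r := unitA (f r).

Lemma S'SU r : S' r -> SU r. Proof. by move=> h; rewrite /SU; exact: (loc_unit LS' h). Qed.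

Lemma SU_Den : Den_l SU.
Proof.
split.
- split.
  + by rewrite /SU rmorph1; exact: unitA1.
  + by rewrite /SU rmorph0; exact: unitA0.
  + by move=> a b ha hb; rewrite /SU rmorphM; exact: unitA_mul.
- move=> r s [v [vs sv]].
  have [t [x [St h]]] := loc_mul LS' (f r * v).
  have : f (t * r - x * s) = 0.
    by rewrite rmorphB !rmorphM -h -!mulrA vs mulr1 subrr.
  move/(loc_ker LS') => [t2 [St2 h2]].
  exists (t2 * t), (t2 * x); split.
  + by apply: S'SU; exact: (SmulS DS').
  + by move/eqP: h2; rewrite mulrBr subr_eq0 !mulrA => /eqP.
- move=> r s [v [vs sv]] rs0.
  have : f r = 0 by rewrite -(mulr1 (f r)) -sv mulrA -rmorphM rs0 rmorph0 mul0r.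
  move/(loc_ker LS') => [t [St h]]; exists t; split => //; exact: S'SU.
Qed.

Lemma SU_loc : is_left_localization f SU.
Proof.
split.
- by [].
- case: LS' => _ Ha _ a; have [s [r [u [Ss hu e]]]] := Ha a.
  by exists s, r, u; split => //; exact: S'SU.
- move=> r; split.
  + move/(loc_ker LS') => [s [Ss h]]; exists s; split => //; exact: S'SU.
  + move=> [s [[v [vs sv]] h]].
    by rewrite -(mul1r (f r)) -vs -mulrA -rmorphM h rmorph0 mulr0.
Qed.

Lemma SU_max : max_Den_l SU.
Proof.
split; first exact: SU_Den.
move=> T DT Hsub x Tx.
have S'T r : S' r -> T r by move=> /S'SU /Hsub.
have TM' a b : T a -> T b -> T (a * b) by case: DT => [[_ _ h] _ _]; exact: h.
pose TA := fun a => exists t, T t /\ a = f t.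
apply: (H (T := TA)); last by exists x.
split.
- split.
  + by exists 1; split; [case: DT => [[]] | rewrite rmorph1].
  + move=> [t [Tt e]]; move/esym: e => /(loc_ker LS') [s [Ss h]].
    case: DT => [[_ H0 _] _ _]; apply: H0; rewrite -h; exact: (TM' _ _ (S'T _ Ss) Tt).
  + by move=> a b [t1 [T1' ->]] [t2 [T2' ->]]; exists (t1 * t2); rewrite rmorphM; split => //; exact: TM'.
- move=> r s [t [Tt ->]].
  case: LS' => _ Ha _; have [s0 [y [u [S0 [us su] ->]]]] := Ha r.
  case: DT => _ Ore _; have [t1 [r1 [T1' e]]] := Ore y t Tt.
  exists (f (t1 * s0)), (f r1); split.
  + by exists (t1 * s0); split => //; exact: (TM' _ _ T1' (S'T _ S0)).
  + by rewrite rmorphM -mulrA (mulrA (f s0)) su mul1r -!rmorphM e.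
- move=> r s [t [Tt ->]] h0.
  case: LS' => _ Ha _; have [s0 [y [u [S0 [us su] ey]]]] := Ha r.
  have e2 : f y = f s0 * r by rewrite ey mulrA su mul1r.
  have : f (y * t) = 0 by rewrite rmorphM e2 -mulrA h0 mulr0.
  move/(loc_ker LS') => [s2 [S2 h2]].
  case: DT => _ _ Dn; have [t3 [T3 h3]] : exists t3, T t3 /\ t3 * (s2 * y) = 0 by apply: (Dn _ t Tt); rewrite -mulrA.
  exists (f (t3 * s2 * s0)); split.
  + exists (t3 * s2 * s0); split => //; exact: (TM' _ _ (TM' _ _ T3 (S'T _ S2)) (S'T _ S0)).
  + by rewrite ey rmorphM -mulrA (mulrA (f s0)) su mul1r -rmorphM -mulrA h3 rmorph0.
Qed.
End Dir1.

Theorem theorem3p11 (R A : nzRingType) (a : R -> Prop) (S' : R -> Prop)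
  (sigma : {rmorphism R -> A})
  (Ha : Ass_l a) (HS' : Den_l_at a S')
  (Hloc : is_left_localization sigma S') :
  max_left_quotient_ring sigma <-> left_localization_maximal A.
Proof.
split.
- move=> [S [MS LS]]; apply: all_units_llm => T DT x Tx.
  exact: (dir2_units MS LS DT Tx).
- move=> /llm_all_units H; exists (SU sigma); split.
  + exact: (SU_max HS'.1 Hloc H).
  + exact: (SU_loc Hloc).
Qed.
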